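(* Let $r\ge 1$ and let $M$ be a finite list of nonzero vectors generating $\mathbb{F}_2^r$, in which each $u\in\mathbb{F}_2^r\setminus\{0\}$ appears with multiplicity $a_u\ge 0$. Assume the $a_u$ ($u\neq 0$) are not all of the same parity. Let $M'$ be the list in which each $u\in\mathbb{F}_2^r\setminus\{0\}$ appears with multiplicity $a_u+1$. Then $d(M)=d(M')$.
   Context: For a finite list $M=(v_1,\dots,v_n)$ of nonzero vectors generating $\mathbb{F}_2^r$, the Cayley graph $G(\mathbb{F}_2^r,M)$ has Laplacian $L$ indexed by $\mathbb{F}_2^r$ with $L_{u,u}=n$ and $L_{u,w}=-\#\{i:u+v_i=w\}$ for $u\ne w$; $\operatorname{coker}L\cong\mathbb{Z}\oplus K(G)$ with $K(G)$ finite abelian (the sandpile group). $d(M)$ denotes the number of even-order cyclic factors in the invariant factor decomposition of $K(G(\mathbb{F}_2^r,M))$, i.e. $d(M)=\dim_{\mathbb{F}_2}K(G)\otimes\mathbb{Z}/2\mathbb{Z}$. *)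

(* Defs.v *)
From HB Require Import structures.
From mathcomp Require Import all_boot all_order all_algebra.
Set Implicit Arguments. Unset Strict Implicit. Unset Printing Implicit Defensive.
Import Order.TTheory GRing.Theory Num.Theory.
Local Open Scope ring_scope.

(* Vertices of the Cayley graph: the vector space F_2^r, as row vectors. *)
Notation vec r := 'rV['F_2]_r.

Definition nV (r : nat) : nat := #|{: vec r}|.

Definition laplacian (r : nat) (M : seq (vec r)) : 'M[int]_(nV r) :=
  \matrix_(i, j)
    let u := (enum_val i : vec r) in let w := (enum_val j : vec r) in
    if u == w then (size M)%:Z else - (count (fun v => u + v == w) M)%:Z.

Definition smith_diag m n (A : 'M[int]_(m, n)) : seq int :=
  match int_Smith_normal_form A with
  | existT2 _ _ (existT2 _ _ (exist2 d _ _)) => d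
  end.

(* coker L = (+)_{i < nV} Z/d_i ; the Z-summand(s) are d_i = 0 and the sandpile
   group K(G) is the torsion part.  d(M) = number of even-order cyclic factors,
   i.e. number of nonzero even diagonal entries of the Smith normal form. *)
Definition dM (r : nat) (M : seq (vec r)) : nat :=
  let d := smith_diag (laplacian M) in
  count (fun i => (d`_i != 0) && ~~ odd (absz d`_i)) (iota 0 (nV r)).

(* Main.v *)
Require Import Defs.
From HB Require Import structures.
From mathcomp Require Import all_boot all_order all_algebra.
Import Order.TTheory GRing.Theory Num.Theory.
Local Open Scope ring_scope.
Set Implicit Arguments. Unset Strict Implicit. Unset Printing Implicit Defensive.

Lemma map_unit_int (F : fieldType) n (L : 'M[int]_n) :
  L \in unitmx -> map_mx (intr : int -> F) L \in unitmx.
Proof. by rewrite !unitmxE det_map_mx => /(rmorph_unit (intr : int -> F)). Qed.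

Lemma rank_smith (F : fieldType) n (L R : 'M[int]_n) D :
  L \in unitmx -> R \in unitmx ->
  \rank (map_mx (intr : int -> F) (L *m D *m R)) = \rank (map_mx (intr : int -> F) D).
Proof.
move=> uL uR; rewrite !map_mxM mxrankMfree ?row_free_unit ?map_unit_int //.
by rewrite eqmxMfull // row_full_unit map_unit_int.
Qed.

Lemma F2_nat m : ((m%:R : 'F_2) != 0) = odd m.
Proof. by rewrite -val_eqE /= (val_Fp_nat (p:=2)) // modn2; case: odd. Qed.

Lemma F2_intr (z : int) : ((z%:~R : 'F_2) != 0) = odd `|z|%N.
Proof.
case: z => m; rewrite ?NegzE ?mulrNz ?oppr_eq0 /= ?F2_nat //.
Qed.

Lemma rank_diagf (F : fieldType) n (c : nat -> F) :
  \rank (\matrix_(i < n, j < n) (c i *+ (i == j :> nat))) =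
  count (fun i => c i != 0) (iota 0 n).
Proof.
elim: n c => [|n IH] c; first by rewrite flatmx0 mxrank0.
have -> : \matrix_(i < n.+1, j < n.+1) (c i *+ (i == j :> nat)) =
   block_mx (c 0%N)%:M 0 0 (\matrix_(i < n, j < n) (c i.+1 *+ (i == j :> nat))) :> 'M_(1 + n).
  apply/matrixP => i j.
  rewrite -(splitK i) -(splitK j).
  case: (split i) => i'; case: (split j) => j'.
  - by rewrite block_mxEul !mxE !ord1 /=.
  - by rewrite block_mxEur !mxE !ord1 /=.
  - by rewrite block_mxEdl !mxE !ord1 /=.
  - by rewrite block_mxEdr !mxE /= eqSS.
transitivity (\rank ((c 0%N)%:M : 'M[F]_1) + \rank (\matrix_(i < n, j < n) (c i.+1 *+ (i == j :> nat))))%N.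
  exact: (@rank_diag_block_mx F 1 1 n n).
rewrite (IH (fun i => c i.+1)) /= -(addn0 1%N) iotaDl count_map.
congr (_ + _)%N.
have [->|c0] := eqVneq (c 0%N) 0; first by rewrite (_ : 0%:M = 0) ?mxrank0 //; apply/matrixP => i j; rewrite !mxE mul0rn.
by rewrite mxrank_unit // unitmxE det_scalar1 unitfE.
Qed.

Lemma rank_map_diag (F : fieldType) n (d : seq int) :
  \rank (map_mx (intr : int -> F) (\matrix_(i < n, j < n) (d`_i *+ (i == j :> nat)))) =
  count (fun i => (d`_i)%:~R != 0 :> F) (iota 0 n).
Proof.
rewrite -rank_diagf; congr (\rank _); apply/matrixP => i j; rewrite !mxE.
by rewrite rmorphMn.
Qed.

Lemma smith_count n (A : 'M[int]_n) :
  (count (fun i => ((nth 0%R (smith_diag A) i) != 0%R) && ~~ odd (absz (nth 0%R (smith_diag A) i))) (iota 0 n)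
   + \rank (map_mx (intr : int -> 'F_2) A))%N = \rank (map_mx (intr : int -> rat) A).
Proof.
rewrite /smith_diag; case: (int_Smith_normal_form A) => L uL [R uR [d _ eA]] /=.
rewrite eA !rank_smith // !rank_map_diag.
rewrite (eq_count (a1 := fun i => (d`_i)%:~R != 0 :> 'F_2) (a2 := fun i => odd (absz d`_i))); last by move=> i; rewrite F2_intr.
rewrite (eq_count (a1 := fun i => (d`_i)%:~R != 0 :> rat)
   (a2 := predU (fun i => (d`_i != 0) && ~~ odd (absz d`_i)) (fun i => odd (absz d`_i)))); last first.
  move=> i /=; rewrite intr_eq0; case: (d`_i) => [[|m]|m] //=; by case: odd.
rewrite -count_predUI (eq_count (a1 := predI _ _) (a2 := pred0)) ?count_pred0 ?addn0 //.
by move=> i /=; case: odd; rewrite ?andbF.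
Qed.
Lemma sum_ev (R : nmodType) r (F : vec r -> R) :
  \sum_(i < nV r) F (enum_val i) = \sum_g F g.
Proof. exact: esym (big_enum_val (I := vec r) (A := predT) F). Qed.

Lemma mul_row (R : pzRingType) r (u : 'rV[R]_(nV r)) (A : 'M_(nV r)) j :
  (u *m A) 0 j = \sum_g u 0 (enum_rank g) * A (enum_rank g) j.
Proof. by rewrite mxE -sum_ev; apply: eq_bigr => i _; rewrite enum_valK. Qed.

Lemma F2_2 : 2 \in [pchar 'F_2]. Proof. exact: pchar_Fp. Qed.
Lemma oppF2 (y : 'F_2) : - y = y. Proof. exact: oppr_pchar2 F2_2 y. Qed.
Lemma addF2 (y : 'F_2) : y + y = 0. Proof. exact: addrr_pchar2 F2_2 y. Qed.
Lemma F2_01 (y : 'F_2) : y = 0 \/ y = 1.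
Proof. by case: y => [[|[|n]]] // ? ; [left|right]; apply/val_inj. Qed.
Lemma mulF2 (y : 'F_2) : y * y = y.
Proof. by case: (F2_01 y) => ->; rewrite ?mul0r ?mul1r. Qed.

Lemma oppv r (w : vec r) : - w = w.
Proof. by apply/matrixP => i j; rewrite mxE oppF2. Qed.
Lemma addvv r (w : vec r) : w + w = 0.
Proof. by rewrite -{2}(oppv w) subrr. Qed.
Lemma eq_addv r (g v h : vec r) : (g + v == h) = (g == h + v).
Proof. by rewrite -{1}(oppv v) subr_eq. Qed.

Lemma pair_sum r (f : vec r -> 'F_2) s : s != 0 -> (forall t, f (t + s) = f t) ->
  \sum_t f t = 0.
Proof.
move=> nzs fs.
have /existsP [k0 /eqP sk0] : [exists k0, s 0 k0 == 1].
  apply: contraR nzs; rewrite negb_exists => /forallP H.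
  apply/eqP/matrixP => i j; rewrite ord1 mxE.
  by case: (F2_01 (s 0 j)) => // E; move: (H j); rewrite E eqxx.
pose phi (t : vec r) := t 0 k0.
have phiD t : phi t + phi (t + s) = 1.
  by rewrite /phi mxE sk0 addrA addF2 add0r.
transitivity (\sum_t (f t * phi t + f t * phi (t + s))).
  by apply: eq_bigr => t _; rewrite -mulrDr phiD mulr1.
rewrite big_split /=.
rewrite [X in _ + X](reindex_inj (addrI s)) /=.
rewrite [X in _ + X](eq_bigr (fun t => f t * phi t)); last first.
  by move=> t _; rewrite (addrC s t) -addrA addvv addr0 fs.
exact: addF2.
Qed.

Lemma conv_core r (a x : vec r -> 'F_2) :
  (forall h, \sum_g x g * a (g + h) = 0) -> \sum_g x g = 1 -> forall k, a k = 0.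
Proof.
move=> Hh Hx k.
have E : \sum_t x t * (\sum_g x g * a (g + (t + k))) = 0.
  by rewrite big1 // => t _; rewrite Hh mulr0.
rewrite -E.
rewrite (eq_bigr (fun t => \sum_s x t * x (t + s) * a (s + k))); last first.
  move=> t _; rewrite mulr_sumr (reindex_inj (addrI t)) /=.
  apply: eq_bigr => s _; rewrite mulrA; congr (_ * a _).
  by rewrite addrACA addvv add0r.
rewrite exchange_big /=.
under eq_bigr => s _ do rewrite -mulr_suml.
rewrite (bigD1 0) //= [X in _ + X]big1 ?addr0.
  by rewrite add0r (eq_bigr x) ?Hx ?mul1r ?add0r // => t _; rewrite addr0 mulF2.
move=> s nzs; rewrite (@pair_sum r (fun t => x t * x (t + s)) s) ?mul0r //.
by move=> t /=; rewrite -addrA addvv addr0 mulrC.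
Qed.

Definition gmx (R : Type) r (a : vec r -> R) : 'M[R]_(nV r) :=
  \matrix_(i, j) a ((enum_val i : vec r) + (enum_val j : vec r)).

Lemma gmxE (R : Type) r (a : vec r -> R) g j : gmx a (enum_rank g) j = a (g + enum_val j).
Proof. by rewrite mxE enum_rankK. Qed.

Lemma kerF2 r (a b : vec r -> 'F_2) k1 k2 : (forall s, b s = a s + 1) -> a k1 != a k2 ->
  forall u : 'rV['F_2]_(nV r),
  u *m gmx a = 0 ->
  u *m gmx b = 0.
Proof.
move=> hb nc u Hu.
pose x g := u 0 (enum_rank g).
have Hh : forall h, \sum_g x g * a (g + h) = 0.
  move=> h; have := congr1 (fun M : 'rV['F_2]_(nV r) => M 0 (enum_rank h : 'I_(nV r))) Hu.
  rewrite mul_row mxE /= => H; rewrite -[RHS]H; apply: eq_bigr => g _.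
  by rewrite gmxE enum_rankK.
have Sx : \sum_g x g = 0.
  case: (F2_01 (\sum_g x g)) => // H1.
  by move: nc; rewrite !(conv_core Hh H1) eqxx.
apply/matrixP => i j; rewrite ord1 mul_row [RHS]mxE.
rewrite (eq_bigr (fun g => x g * a (g + enum_val j) + x g)); last first.
  by move=> g _; rewrite gmxE hb mulrDr mulr1.
by rewrite big_split /= Sx addr0 Hh.
Qed.

From mathcomp Require Import zify.

Lemma lap_nil r : laplacian (nil : seq (vec r)) = 0.
Proof. by apply/matrixP => i j; rewrite !mxE /=; case: ifP. Qed.

Lemma addv_eqself r (h v : vec r) : (h + v == h) = (v == 0).
Proof. by rewrite -{2}[h]addr0 (inj_eq (addrI h)). Qed.

Lemma lap_cons r v (M : seq (vec r)) : v != 0 ->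
  laplacian (v :: M) = laplacian M +
   \matrix_(i, j) ((((enum_val i : vec r) == enum_val j) : nat)%:Z
                   - (((enum_val i : vec r) + v == enum_val j) : nat)%:Z).
Proof.
move=> nz; apply/matrixP => i j; rewrite !mxE /=.
case: eqP => [E|NE].
  by rewrite E addv_eqself (negbTE nz) /=; lia.
case: (_ + v == _) => /=; lia.
Qed.

Lemma sum_delta (F : pzRingType) r (f : vec r -> F) c :
  \sum_g f g * ((g == c) : nat)%:R = f c.
Proof.
rewrite (bigD1 c) //= eqxx mulr1 big1 ?addr0 // => g /negbTE ->.
by rewrite mulr0.
Qed.

Lemma lap_row (F : fieldType) r (M : seq (vec r)) (u : 'rV[F]_(nV r)) h :
  0 \notin M ->
  (u *m map_mx (intr : int -> F) (laplacian M)) 0 (enum_rank h) =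
  \sum_(v <- M) (u 0 (enum_rank h) - u 0 (enum_rank (h + v))).
Proof.
elim: M => [|v M IH]; first by rewrite lap_nil map_mx0 mulmx0 mxE big_nil.
rewrite in_cons negb_or => /andP[nz nM].
rewrite eq_sym in nz; rewrite (lap_cons M nz).
set E := \matrix_(i, j) _.
have -> : map_mx (intr : int -> F) (laplacian M + E) = map_mx intr (laplacian M) + map_mx intr E.
  by apply/matrixP=> i j; rewrite !mxE rmorphD.
rewrite mulmxDr mxE IH // big_cons addrC; congr (_ + _).
rewrite mul_row.
rewrite (eq_bigr (fun g => u 0 (enum_rank g) * ((g == h) : nat)%:R
     - u 0 (enum_rank g) * ((g == h + v) : nat)%:R)); last first.
  move=> g _; rewrite !mxE !enum_rankK rmorphB /= -!pmulrn -mulrBr.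
  by rewrite eq_addv.
by rewrite sumrB !(sum_delta (fun g => u 0 (enum_rank g))).
Qed.

From mathcomp Require Import ring.

Lemma const_of_ker (F : realFieldType) r (M : seq (vec r)) (u : 'rV[F]_(nV r)) :
  0 \notin M -> (forall s, s \in <<M>>%VS) ->
  u *m map_mx (intr : int -> F) (laplacian M) = 0 ->
  forall g, u 0 (enum_rank g) = u 0 (enum_rank 0).
Proof.
move=> nM Hspan Hu.
pose x g := u 0 (enum_rank g).
have Hd h : \sum_(v <- M) (x h - x (h + v)) = 0.
  by rewrite -lap_row // Hu mxE.
have Ev v : \sum_h (x h - x (h + v)) ^+ 2 = 2 * \sum_h x h * (x h - x (h + v)).
  rewrite (eq_bigr (fun h => x h * (x h - x (h + v)) + x (h + v) * (x (h + v) - x h))); last first.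
    by move=> h _; ring.
  rewrite big_split /= [X in _ + X](reindex_inj (addIr v)) /=.
  rewrite [X in _ + X](eq_bigr (fun h => x h * (x h - x (h + v)))); last first.
    by move=> h _; rewrite -addrA addvv addr0.
  by rewrite mulr_natl mulr2n.
have S0 : \sum_(v <- M) \sum_h (x h - x (h + v)) ^+ 2 = 0.
  under eq_bigr => v _ do rewrite Ev.
  rewrite -mulr_sumr exchange_big /=.
  under eq_bigr => h _ do rewrite -mulr_sumr Hd mulr0.
  by rewrite big1 ?mulr0.
have Hv v h : v \in M -> x (h + v) = x h.
  move=> vM.
  have : \sum_h (x h - x (h + v)) ^+ 2 = 0.
    move/eqP: S0; rewrite psumr_eq0; last by move=> i _; apply: sumr_ge0 => j _; apply: sqr_ge0.
    by move/allP => /(_ v vM) /eqP.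
  move/psumr_eq0P => /(_ (fun j _ => sqr_ge0 _) h isT) /eqP.
  by rewrite sqrf_eq0 subr_eq0 => /eqP.
have Ps s : forall h, x (h + s) = x h.
  move: (Hspan s); rewrite -[M]/(tval (in_tuple M)) => /coord_span ->.
  apply: (big_ind (fun s => forall h, x (h + s) = x h)).
  - by move=> h; rewrite addr0.
  - by move=> s1 s2 H1 H2 h; rewrite addrA H2 H1.
  move=> i _ h; case: (F2_01 (coord (in_tuple M) i s)) => ->.
    by rewrite scale0r addr0.
  by rewrite scale1r Hv // mem_nth.
by move=> g; have := Ps g 0; rewrite add0r.
Qed.

Lemma ker_of_const (F : fieldType) r (M : seq (vec r)) (u : 'rV[F]_(nV r)) :
  0 \notin M -> (forall g, u 0 (enum_rank g) = u 0 (enum_rank 0)) ->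
  u *m map_mx (intr : int -> F) (laplacian M) = 0.
Proof.
move=> nM H; apply/matrixP => i j; rewrite ord1 [RHS]mxE -(enum_valK j) lap_row //.
by rewrite big1 // => v _; rewrite !H subrr.
Qed.

Lemma rank_eq_ker (F : fieldType) n (A B : 'M[F]_n) :
  (forall u : 'rV_n, u *m A = 0 -> u *m B = 0) ->
  (forall u : 'rV_n, u *m B = 0 -> u *m A = 0) -> \rank A = \rank B.
Proof.
move=> hAB hBA.
have sub (X Y : 'M[F]_n) : (forall u : 'rV_n, u *m X = 0 -> u *m Y = 0) ->
    (kermx X <= kermx Y)%MS.
  move=> h; apply/sub_kermxP; apply/row_matrixP => i.
  by rewrite row_mul row0; apply: h; rewrite -row_mul mulmx_ker row0.
have e : (kermx A == kermx B)%MS by rewrite !sub.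
have := mxrank_ker A; rewrite (eqmxP e) mxrank_ker.
have := rank_leq_col A; have := rank_leq_col B; lia.
Qed.

Lemma rankQ_eq r (M M' : seq (vec r)) :
  0 \notin M -> 0 \notin M' -> (forall s, s \in <<M>>%VS) -> (forall s, s \in <<M'>>%VS) ->
  \rank (map_mx (intr : int -> rat) (laplacian M)) = \rank (map_mx (intr : int -> rat) (laplacian M')).
Proof.
move=> n1 n2 s1 s2; apply: rank_eq_ker => u Hu; apply: ker_of_const => //;
  exact: const_of_ker Hu.
Qed.

Definition aM r (M : seq (vec r)) (s : vec r) : 'F_2 :=
  if s == 0 then (size M)%:R else (count_mem s M)%:R.

Lemma lapF2 r (M : seq (vec r)) :
  map_mx (intr : int -> 'F_2) (laplacian M) = gmx (aM M).
Proof.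
apply/matrixP => i j; rewrite !mxE /aM eq_addv add0r.
case: eqP => _; first by rewrite -pmulrn.
rewrite rmorphN /= oppF2 -pmulrn; congr (_ %:R); apply: eq_count => v /=.
by rewrite addrC eq_addv addrC.
Qed.

Lemma size_count (T : finType) (s : seq T) : size s = (\sum_g count_mem g s)%N.
Proof.
elim: s => [|y s IH] /=; first by rewrite big1.
rewrite big_split /= -IH (bigD1 y) //= eqxx big1 // => g /negbTE.
by rewrite eq_sym => ->.
Qed.

Lemma aM_succ r (M M' : seq (vec r)) : (1 <= r)%N -> 0 \notin M ->
  (forall u, count_mem u M' = (if u == 0 then 0 else (count_mem u M).+1)) ->
  forall s, aM M' s = aM M s + 1.
Proof.
move=> r1 nM hc s; rewrite /aM; case: eqP => [_|/eqP nz]; last first.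
  by rewrite hc (negbTE nz) mulrSr.
rewrite !size_count !natr_sum (bigD1 0) //= [in RHS](bigD1 0) //= hc eqxx.
rewrite (count_memPn nM) !add0r.
rewrite (eq_bigr (fun g => (count_mem g M)%:R + 1)); last first.
  by move=> g /negbTE ng; rewrite hc ng mulrSr.
rewrite big_split /=; congr (_ + _).
rewrite (eq_bigl (fun i => i \in predC1 0)) => [|i]; last by rewrite !inE.
rewrite sumr_const cardC1 card_mx card_Fp //= mul1n.
have ev : odd (2 ^ r).-1.
  have : (0 < 2 ^ r)%N by rewrite expn_gt0.
  case E: (2 ^ r)%N => [|k] //= _.
  have := congr1 odd E; rewrite oddX /= => /esym; case: (r) r1 => //= r' _.
  by case: odd.
have := F2_nat (2 ^ r).-1; rewrite ev; case: (F2_01 ((2 ^ r).-1)%:R) => -> //.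
Qed.

Unset Implicit Arguments.
Set Strict Implicit.

Theorem mainTheorem5 (r : nat) (M M' : seq 'rV['F_2]_r) :
  (1 <= r)%N ->
  0 \notin M ->
  (<<M>>%VS = fullv) ->
  (exists u w : 'rV['F_2]_r,
     [/\ u != 0, w != 0 & odd (count_mem u M) != odd (count_mem w M)]) ->
  (forall u : 'rV['F_2]_r,
     count_mem u M' = (if u == 0 then 0 else (count_mem u M).+1)) ->
  dM M = dM M'.
Proof.
move=> r1 nM hspan [k1 [k2 [nz1 nz2 hpar]]] hc.
have nM' : 0 \notin M' by apply/count_memPn; rewrite hc eqxx.
have sM s : s \in <<M>>%VS by rewrite hspan memvf.
have sM' s : s \in <<M'>>%VS.
  have sub : (<<M>> <= <<M'>>)%VS.
    apply: sub_span => v vM.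
    have nz : v != 0 by apply: contraNneq nM => <-.
    by rewrite -has_pred1 has_count hc (negbTE nz).
  exact: (subvP sub _ (sM s)).
have hb := aM_succ r1 nM hc.
have nc : aM M k1 != aM M k2.
  rewrite /aM (negbTE nz1) (negbTE nz2); apply: contra hpar => /eqP E.
  by rewrite -!F2_nat E.
have hb' s : aM M s = aM M' s + 1 by rewrite hb -addrA addF2 addr0.
have nc' : aM M' k1 != aM M' k2 by rewrite !hb (inj_eq (addIr 1)).
have eF2 : \rank (map_mx (intr : int -> 'F_2) (laplacian M)) =
           \rank (map_mx (intr : int -> 'F_2) (laplacian M')).
  rewrite !lapF2; apply: rank_eq_ker => u.
    exact: kerF2 hb nc u.
  exact: kerF2 hb' nc' u.
have eQ := rankQ_eq nM nM' sM sM'.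
have e1 := smith_count (laplacian M); have e2 := smith_count (laplacian M').
rewrite /dM; apply: (@addIn (\rank (map_mx (intr : int -> 'F_2) (laplacian M)))).
by rewrite e1 eF2 e2 eQ.
Qed.
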